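(* Consider the volume-pricing market described in the context. Then: (i) $R(p)$ is unimodal on $[\eta,\infty)$ (i.e., there is $\hat p>\eta$ with $R'(p)>0$ for $\eta\le p<\hat p$, $R'(\hat p)=0$ and $R'(p)<0$ for $p>\hat p$), and the feasible price set $\mathcal P$ is non-empty and connected. (ii) If $R'(p_0)<0$, then the network is opt-saturated and the unique equilibrium price is $p^\star=p_0=p_0(\kappa_{\mathrm{peak}})$, the threshold price, which satisfies $A(p_0)=C_{3g}$ and, viewing $\kappa_{\mathrm{peak}}$ as a variable, $\frac{\partial p_0(\kappa_{\mathrm{peak}})}{\partial\kappa_{\mathrm{peak}}}>0$. (iii) If $R'(p_0)>0$, then the network is opt-unsaturated and the unique equilibrium price $p^\star=p^\star(\kappa_{\mathrm{avg}})$ is the solution of $R'(p)=0$; moreover, viewing $\kappa_{\mathrm{avg}}$ as a variable, $\frac{\partial\big(p^\star(\kappa_{\mathrm{avg}})\,\kappa_{\mathrm{avg}}\big)}{\partial\kappa_{\mathrm{avg}}}>0$.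
   Context: Market model (single cell). There are $\hat N$ users (treated as a continuum of mass $\hat N$) in one base-station cell with capacity $C_{3g}>0$ (traffic volume per time slot), and time slots $t\in T=\{1,\dots,|T|\}$. Each user's daily traffic demand $\Phi$ is random with density $f_\Phi(x)=x^{-\sigma}/Z$ for $0\le x\le\Phi_{\max}$, where $0<\sigma<1$ and $Z=\Phi_{\max}^{1-\sigma}/(1-\sigma)$. All users share a temporal preference $w(t)> 0$ with $\sum_{t\in T}w(t)=1$; a user with demand $\Phi$ has per-slot demand $\phi(t)=w(t)\Phi$. The willingness to pay is $\gamma(t)=w(t)^{1-\theta}$ with price sensitivity $\theta\in(0,1)$. Offloading indicators: constants $\kappa_{\mathrm{avg}},\kappa_{\mathrm{peak}}\in(0,1]$ (independent of price). Delay profile and WiFi contact probabilities are homogeneous across users and time, so that every user's daily cellular (3G) traffic equals $\kappa_{\mathrm{avg}}$ times its total (3G+WiFi) traffic; and if $X_{\rm tot}(p)$ is the total traffic sent in the cell in a day at price $p$, the peak per-slot cellular traffic is $A(p)=\kappa_{\mathrm{peak}}X_{\rm tot}(p)$. Volume pricing with unit price $p>0$ per unit of cellular traffic: a user with demand $\Phi$ chooses $x(t)\in[0,\phi(t)]$ to maximize $\sum_{t}w(t)^{1-\theta}x(t)^\theta-p\,\kappa_{\mathrm{avg}}\sum_t x(t)$; its optimal choice is $x^\star_\Phi(t)=w(t)\min\{\Phi,(\theta/(p\kappa_{\mathrm{avg}}))^{1/(1-\theta)}\}$ (every user participates). Then $X_{\rm tot}(p)=\hat N\int_0^{\Phi_{\max}}\sum_t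 x^\star_\Phi(t)f_\Phi(\Phi)\,d\Phi$, and the provider's revenue with linear cellular cost coefficient $\eta>0$ is $R(p)=(p-\eta)\,\kappa_{\mathrm{avg}}X_{\rm tot}(p)$. Feasible price set: $\mathcal P=\{p: R(p)>0,\ A(p)\le C_{3g}\}$; threshold price $p_0=\inf\mathcal P$. An equilibrium price is any $p^\star\in\arg\max_{p\in\mathcal P}R(p)$. The network is saturated at $p$ if $A(p)=C_{3g}$; for a unique equilibrium price $p^\star$, the network is called opt-saturated if it is saturated at $p^\star$ and opt-unsaturated otherwise. *)

(* Defs.v *)
From Stdlib Require Import Reals Lra ClassicalEpsilon.
Open Scope R_scope.

(* Finite sum over time slots t = 0, ..., n-1 (the slots T = {1,...,|T|}
   are re-indexed from 0; |T| = n). *)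
Fixpoint sumT (n : nat) (f : nat -> R) : R :=
  match n with
  | O => 0
  | S m => sumT m f + f m
  end.

(* Riemann integral of f over [a,b] (a <= b): the value of RiemannInt for
   any integrability proof (junk value 0 is irrelevant if f is integrable,
   which is the case for the integrand used below). *)
Definition RInt (f : R -> R) (a b : R) : R :=
  epsilon (inhabits 0)
    (fun v => exists pr : Riemann_integrable f a b, RiemannInt pr = v).

Definition Zconst (sigma Phimax : R) : R :=
  Rpower Phimax (1 - sigma) / (1 - sigma).

Definition fdens (sigma Phimax x : R) : R :=
  Rpower x (- sigma) / Zconst sigma Phimax.

(* Optimal per-slot traffic of a user with daily demand Phi at price p:
   x*_Phi(t) = w(t) min{Phi, (theta/(p kavg))^(1/(1-theta))}. *)
Definition xstar (w : nat -> R) (theta kavg p Phi : R) (t : nat) : R :=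
  w t * Rmin Phi (Rpower (theta / (p * kavg)) (1 / (1 - theta))).

(* Total (3G + WiFi) traffic in the cell in a day at price p:
   X_tot(p) = Nhat * int_0^Phimax sum_t x*_Phi(t) f_Phi(Phi) dPhi. *)
Definition Xtot (n : nat) (w : nat -> R) (Nhat sigma Phimax theta kavg p : R) : R :=
  Nhat * RInt (fun Phi => sumT n (xstar w theta kavg p Phi) * fdens sigma Phimax Phi)
              0 Phimax.

Definition Rev (n : nat) (w : nat -> R) (Nhat sigma Phimax theta kavg eta p : R) : R :=
  (p - eta) * kavg * Xtot n w Nhat sigma Phimax theta kavg p.

Definition Apeak (n : nat) (w : nat -> R) (Nhat sigma Phimax theta kavg kpeak p : R) : R :=
  kpeak * Xtot n w Nhat sigma Phimax theta kavg p.

Definition Pset (n : nat) (w : nat -> R)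
  (Nhat sigma Phimax theta kavg kpeak eta C : R) (p : R) : Prop :=
  0 < Rev n w Nhat sigma Phimax theta kavg eta p /\
  Apeak n w Nhat sigma Phimax theta kavg kpeak p <= C.

Definition is_equilibrium (n : nat) (w : nat -> R)
  (Nhat sigma Phimax theta kavg kpeak eta C : R) (p : R) : Prop :=
  Pset n w Nhat sigma Phimax theta kavg kpeak eta C p /\
  forall p', Pset n w Nhat sigma Phimax theta kavg kpeak eta C p' ->
    Rev n w Nhat sigma Phimax theta kavg eta p' <=
    Rev n w Nhat sigma Phimax theta kavg eta p.

Definition is_glb (S : R -> Prop) (m : R) : Prop :=
  (forall x, S x -> m <= x) /\
  (forall m', (forall x, S x -> m' <= x) -> m' <= m).

Definition interval_set (S : R -> Prop) : Prop :=
  forall a b c, S a -> S c -> a <= b -> b <= c -> S b.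

(* Main.v *)
Require Import Defs.
From Stdlib Require Import Reals Lra ClassicalEpsilon.
From Coquelicot Require Import Coquelicot.
Open Scope R_scope.

Module P1.

Lemma dpl_loc (f g : R -> R) x l r : 0 < r ->
  (forall z, Rabs (z - x) < r -> f z = g z) ->
  derivable_pt_lim f x l -> derivable_pt_lim g x l.
Proof.
  intros Hr Heq Hf eps Heps.
  destruct (Hf eps Heps) as [d Hd].
  assert (Hm : 0 < Rmin d r) by (apply Rmin_pos; [apply cond_pos|lra]).
  exists (mkposreal _ Hm). intros h Hh0 Hh. simpl in Hh.
  rewrite <- !Heq.
  - apply Hd; auto. apply Rlt_le_trans with (1 := Hh). apply Rmin_l.
  - replace (x - x) with 0 by ring. rewrite Rabs_R0; lra.
  - replace (x + h - x) with h by ring.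
    apply Rlt_le_trans with (1 := Hh). apply Rmin_r.
Qed.

Lemma dpl_cont f x l : derivable_pt_lim f x l -> continuity_pt f x.
Proof. intro H. apply derivable_continuous_pt. exists l. exact H. Qed.

Definition Pw (a x : R) : R := if Rlt_dec 0 x then Rpower x a else 0.

Lemma Rpower_pos x a : 0 < Rpower x a.
Proof. unfold Rpower. apply exp_pos. Qed.

Lemma small_pow a e : 0 < a -> 0 < e ->
  exists d, 0 < d /\ forall h, 0 < h < d -> Rpower h a < e.
Proof.
  intros Ha He. exists (Rpower e (/a)). split. apply Rpower_pos.
  intros h Hh. apply Rlt_le_trans with (Rpower (Rpower e (/a)) a).
  apply Rlt_Rpower_l; lra.
  rewrite Rpower_mult. replace (/a * a) with 1 by (field; lra). rewrite Rpower_1; lra.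
Qed.

Lemma Pw_deriv_pos a x : 0 < x -> derivable_pt_lim (Pw a) x (a * Rpower x (a - 1)).
Proof.
  intros Hx. apply dpl_loc with (f := fun z => Rpower z a) (r := x); auto.
  - intros z Hz. unfold Pw. destruct (Rlt_dec 0 z); auto.
    exfalso. apply Rabs_def2 in Hz. lra.
  - apply derivable_pt_lim_power; auto.
Qed.

Lemma Pw_deriv a x : 0 < a -> 0 <= x ->
  derivable_pt_lim (Pw (a + 1)) x ((a + 1) * Pw a x).
Proof.
  intros Ha Hx. destruct (Rle_lt_or_eq_dec _ _ Hx) as [Hx'|Hx'].
  - unfold Pw at 2. destruct (Rlt_dec 0 x); [|lra].
    assert (H := Pw_deriv_pos (a+1) x Hx'). replace (a+1-1) with a in H by ring. exact H.
  - subst x. unfold Pw at 2. destruct (Rlt_dec 0 0); [lra|]. rewrite Rmult_0_r.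
    intros eps Heps. destruct (small_pow a eps Ha Heps) as [d [Hd Hd']].
    exists (mkposreal d Hd). intros h Hh0 Hh. simpl in Hh.
    unfold Pw. rewrite Rplus_0_l. destruct (Rlt_dec 0 0); [lra|].
    destruct (Rlt_dec 0 h).
    + rewrite Rpower_plus, Rpower_1 by auto.
      replace ((Rpower h a * h - 0) / h - 0) with (Rpower h a) by (field; lra).
      rewrite Rabs_pos_eq by (left; apply Rpower_pos). apply Hd'.
      rewrite Rabs_pos_eq in Hh; lra.
    + replace ((0 - 0) / h - 0) with 0 by (field; lra). rewrite Rabs_R0; lra.
Qed.

Lemma Pw_cont a x : 0 < a -> continuity_pt (Pw a) x.
Proof.
  intros Ha. destruct (Rtotal_order 0 x) as [Hx|[Hx|Hx]].
  - eapply dpl_cont. apply Pw_deriv_pos; auto.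
  - subst x. intros eps Heps. destruct (small_pow a eps Ha Heps) as [d [Hd Hd']].
    exists d. split; auto. intros x [_ Hx]. simpl in *. unfold R_dist in *.
    unfold Pw. destruct (Rlt_dec 0 0); [lra|]. destruct (Rlt_dec 0 x).
    + rewrite Rminus_0_r, Rabs_pos_eq by (left; apply Rpower_pos). apply Hd'.
      rewrite Rminus_0_r, Rabs_pos_eq in Hx; lra.
    + rewrite Rminus_0_r, Rabs_R0; lra.
  - apply dpl_cont with 0. apply dpl_loc with (f := fun _ => 0) (r := - x).
    lra. intros z Hz. unfold Pw. destruct (Rlt_dec 0 z); auto.
    apply Rabs_def2 in Hz. lra. apply derivable_pt_lim_const.
Qed.

Lemma cont_conv f x : continuity_pt f x -> continuous f x.
Proof. intro H. apply continuity_pt_filterlim. exact H. Qed.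

Lemma RInt_defs_eq f a b v : is_RInt f a b v -> Defs.RInt f a b = v.
Proof.
  intro H. assert (pr : Riemann_integrable f a b).
  { apply ex_RInt_Reals_0. exists v. exact H. }
  unfold Defs.RInt.
  destruct (epsilon_spec (inhabits 0) (fun v => exists pr : Riemann_integrable f a b, RiemannInt pr = v)
     (ex_intro _ _ (ex_intro _ pr eq_refl))) as [pr' Hpr'].
  rewrite <- Hpr'. rewrite <- RInt_Reals. apply is_RInt_unique. exact H.
Qed.

End P1.
Import P1.

Module P2.

Section S.
Variables (n : nat) (w : nat -> R) (Nhat sg M th eta : R).
Hypothesis Hwsum : sumT n w = 1.
Hypothesis HN : 0 < Nhat.
Hypothesis Hsg : 0 < sg < 1.
Hypothesis HM : 0 < M.
Hypothesis Hth : 0 < th < 1.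
Hypothesis Heta : 0 < eta.

Definition Zc := Zconst sg M.
Definition sf q := Rpower q (1 - sg) / Rpower M (1 - sg).
Definition Gf q := if Rle_dec M q then M * (1 - sg) / (2 - sg) else q * (1 - sf q / (2 - sg)).
Definition Gd q := if Rle_dec M q then 0 else 1 - sf q.
Definition Qy y := Rpower (th / y) (1 / (1 - th)).

Lemma sumT_scal m c : sumT m (fun t => w t * c) = c * sumT m w.
Proof. induction m; simpl. ring. rewrite IHm. ring. Qed.

Lemma Zc_pos : 0 < Zc.
Proof. unfold Zc, Zconst. apply Rdiv_lt_0_compat. apply Rpower_pos. lra. Qed.

Lemma int_low b : 0 < b ->
  is_RInt (fun x => Pw (1 - sg) x / Zc) 0 b (Rpower b (2 - sg) / ((2 - sg) * Zc)).
Proof.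
  intros Hb. assert (HZ := Zc_pos).
  set (F := fun x => / ((2 - sg) * Zc) * Pw (1 - sg + 1) x).
  assert (H : is_RInt (fun x => / ((2 - sg) * Zc) * ((1 - sg + 1) * Pw (1 - sg) x)) 0 b (minus (F b) (F 0))).
  { apply (is_RInt_derive F).
    - intros x Hx. rewrite Rmin_left, Rmax_right in Hx by lra.
      apply is_derive_Reals. apply derivable_pt_lim_scal. apply Pw_deriv; lra.
    - intros x Hx. apply cont_conv. apply continuity_pt_scal. apply continuity_pt_scal.
      apply Pw_cont; lra. }
  replace (Rpower b (2 - sg) / ((2 - sg) * Zc)) with (minus (F b) (F 0)).
  - eapply is_RInt_ext; [|exact H]. intros x _. simpl. field. lra.
  - unfold minus, plus, opp, F, Pw; simpl. destruct (Rlt_dec 0 b); [|lra].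
    destruct (Rlt_dec 0 0); [lra|]. replace (1 - sg + 1) with (2 - sg) by ring. field. lra.
Qed.

Lemma int_high q : 0 < q -> q < M ->
  is_RInt (fun x => q * Rpower x (- sg) / Zc) q M
     (q * (Rpower M (1 - sg) - Rpower q (1 - sg)) / ((1 - sg) * Zc)).
Proof.
  intros Hq HqM. assert (HZ := Zc_pos).
  set (F := fun x => q / ((1 - sg) * Zc) * Rpower x (1 - sg)).
  assert (H : is_RInt (fun x => q / ((1 - sg) * Zc) * ((1 - sg) * Rpower x (1 - sg - 1))) q M (minus (F M) (F q))).
  { apply (is_RInt_derive F).
    - intros x Hx. rewrite Rmin_left, Rmax_right in Hx by lra.
      apply is_derive_Reals. apply derivable_pt_lim_scal. apply derivable_pt_lim_power; lra.
    - intros x Hx. rewrite Rmin_left, Rmax_right in Hx by lra. apply cont_conv.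
      apply continuity_pt_scal. apply continuity_pt_scal.
      eapply dpl_cont. apply derivable_pt_lim_power; lra. }
  replace (q * (Rpower M (1 - sg) - Rpower q (1 - sg)) / ((1 - sg) * Zc)) with (minus (F M) (F q)).
  - eapply is_RInt_ext; [|exact H]. intros x _. simpl. replace (1 - sg - 1) with (- sg) by ring.
    field. lra.
  - unfold minus, plus, opp, F; simpl. field. lra.
Qed.

Lemma integral_val q : 0 < q ->
  is_RInt (fun x => Rmin x q * (Rpower x (- sg) / Zc)) 0 M (Gf q).
Proof.
  intros Hq. assert (HZ := Zc_pos).
  assert (Hpw : forall x, 0 < x -> x * Rpower x (- sg) = Pw (1 - sg) x).
  { intros x Hx. unfold Pw. destruct (Rlt_dec 0 x); [|lra].
    replace (1 - sg) with (1 + - sg) by ring. rewrite Rpower_plus, Rpower_1; auto. }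
  unfold Gf. destruct (Rle_dec M q).
  - eapply is_RInt_ext with (f := fun x => Pw (1 - sg) x / Zc).
    + rewrite Rmin_left, Rmax_right by lra. intros x Hx.
      rewrite Rmin_left by lra. rewrite <- Hpw by lra. simpl. field. lra.
    + replace (M * (1 - sg) / (2 - sg)) with (Rpower M (2 - sg) / ((2 - sg) * Zc)).
      apply int_low; lra.
      unfold Zc, Zconst. replace (2 - sg) with (1 + (1 - sg)) by ring.
      rewrite Rpower_plus, Rpower_1 by lra. assert (0 < Rpower M (1 - sg)) by apply Rpower_pos.
      field. lra.
  - assert (HqM : q < M) by lra.
    replace (q * (1 - sf q / (2 - sg))) with
      (plus (Rpower q (2 - sg) / ((2 - sg) * Zc)) (q * (Rpower M (1 - sg) - Rpower q (1 - sg)) / ((1 - sg) * Zc))).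
    apply (is_RInt_Chasles (V := R_NormedModule)) with q.
    + eapply is_RInt_ext with (f := fun x => Pw (1 - sg) x / Zc).
      * rewrite Rmin_left, Rmax_right by lra. intros x Hx.
        rewrite Rmin_left by lra. rewrite <- Hpw by lra. simpl. field. lra.
      * apply int_low; lra.
    + eapply is_RInt_ext with (f := fun x => q * Rpower x (- sg) / Zc).
      * rewrite Rmin_left, Rmax_right by lra. intros x Hx.
        rewrite Rmin_right by lra. simpl. field. lra.
      * apply int_high; lra.
    + unfold plus; simpl. unfold sf, Zc, Zconst. replace (2 - sg) with (1 + (1 - sg)) by ring.
      rewrite Rpower_plus, Rpower_1 by lra. assert (0 < Rpower M (1 - sg)) by apply Rpower_pos.
      field. lra.
Qed.

Lemma Xtot_eq k p : Xtot n w Nhat sg M th k p = Nhat * Gf (Qy (p * k)).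
Proof.
  unfold Xtot. f_equal. apply RInt_defs_eq.
  eapply is_RInt_ext; [|apply (integral_val (Qy (p * k))); apply Rpower_pos].
  intros x _. simpl. unfold xstar. rewrite sumT_scal, Hwsum, Rmult_1_r. unfold fdens. reflexivity.
Qed.

End S.

End P2.
Import P2.

Module P3.

Lemma dpl_ext (f g : R -> R) x l : (forall z, f z = g z) ->
  derivable_pt_lim f x l -> derivable_pt_lim g x l.
Proof. intros H. apply dpl_loc with 1; [lra|]. intros; auto. Qed.

Lemma glue (f1 f2 : R -> R) x l : derivable_pt_lim f1 x l -> derivable_pt_lim f2 x l ->
  f1 x = f2 x ->
  derivable_pt_lim (fun y => if Rle_dec x y then f2 y else f1 y) x l.
Proof.
  intros H1 H2 E eps Heps.
  destruct (H1 eps Heps) as [d1 Hd1]. destruct (H2 eps Heps) as [d2 Hd2].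
  assert (Hm : 0 < Rmin d1 d2) by (apply Rmin_pos; apply cond_pos).
  exists (mkposreal _ Hm). intros h Hh0 Hh. simpl in Hh.
  destruct (Rle_dec x x); [|lra].
  destruct (Rle_dec x (x + h)).
  - apply Hd2; auto. apply Rlt_le_trans with (1 := Hh); apply Rmin_r.
  - rewrite <- E. apply Hd1; auto. apply Rlt_le_trans with (1 := Hh); apply Rmin_l.
Qed.

Section S.
Variables (Nhat sg M th eta : R).
Hypothesis HN : 0 < Nhat.
Hypothesis Hsg : 0 < sg < 1.
Hypothesis HM : 0 < M.
Hypothesis Hth : 0 < th < 1.
Hypothesis Heta : 0 < eta.

Notation sf := (sf sg M).
Notation Gf := (Gf sg M).
Notation Gd := (Gd sg M).
Notation Qy := (Qy th).

Lemma RpM_pos : 0 < Rpower M (1 - sg).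
Proof. apply Rpower_pos. Qed.

Lemma g1_deriv q : 0 < q ->
  derivable_pt_lim (fun q => q * (1 - sf q / (2 - sg))) q (1 - sf q).
Proof.
  intros Hq. assert (HB := RpM_pos). apply is_derive_Reals.
  unfold sf. unfold Rpower at 1 3. auto_derive.
  - auto.
  - field. repeat split; lra.
Qed.


Lemma sf_M : sf M = 1.
Proof. unfold sf. assert (HB := RpM_pos). field. lra. Qed.

Lemma Gf_deriv q : 0 < q -> derivable_pt_lim Gf q (Gd q).
Proof.
  intros Hq. destruct (Rtotal_order q M) as [H|[H|H]].
  - apply dpl_loc with (f := fun q => q * (1 - sf q / (2 - sg))) (r := M - q). lra.
    + intros z Hz. apply Rabs_def2 in Hz. unfold Gf. destruct (Rle_dec M z); auto; lra.
    + unfold Gd. destruct (Rle_dec M q); [lra|]. apply g1_deriv; auto.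
  - subst q. unfold Gd. destruct (Rle_dec M M); [|lra].
    unfold Gf. apply (glue (fun q => q * (1 - sf q / (2 - sg))) (fun _ => M * (1 - sg) / (2 - sg))).
    + replace 0 with (1 - sf M) by (rewrite sf_M; ring). apply g1_deriv; auto.
    + apply derivable_pt_lim_const.
    + rewrite sf_M. field. lra.
  - apply dpl_loc with (f := fun _ => M * (1 - sg) / (2 - sg)) (r := q - M). lra.
    + intros z Hz. apply Rabs_def2 in Hz. unfold Gf. destruct (Rle_dec M z); auto; lra.
    + unfold Gd. destruct (Rle_dec M q); [|lra]. apply derivable_pt_lim_const.
Qed.

Lemma Qy_pos y : 0 < Qy y.
Proof. apply Rpower_pos. Qed.

Lemma Qyk_deriv k p : 0 < k -> 0 < p ->
  derivable_pt_lim (fun p => Qy (p * k)) p (- Qy (p * k) / ((1 - th) * p)).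
Proof.
  intros Hk Hp. apply is_derive_Reals. unfold Qy, Rpower. auto_derive.
  - split. apply Rmult_integral_contrapositive; lra. split; auto.
    apply Rdiv_lt_0_compat; [lra|]. apply Rmult_lt_0_compat; lra.
  - unfold Rdiv. field. repeat split; try lra.
Qed.

Definition Dv k p := k * Nhat * (Gf (Qy (p * k)) - (p - eta) * Gd (Qy (p * k)) * Qy (p * k) / ((1 - th) * p)).

Lemma Revf_deriv k p : 0 < k -> 0 < p ->
  derivable_pt_lim (fun p => (p - eta) * k * (Nhat * Gf (Qy (p * k)))) p (Dv k p).
Proof.
  intros Hk Hp.
  assert (Hc : derivable_pt_lim (fun p => Gf (Qy (p * k))) p (Gd (Qy (p * k)) * (- Qy (p * k) / ((1 - th) * p)))).
  { apply (derivable_pt_lim_comp (fun p => Qy (p * k)) Gf). apply Qyk_deriv; auto.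
    apply Gf_deriv. apply Qy_pos. }
  replace (Dv k p) with (k * (Nhat * Gf (Qy (p * k))) + (p - eta) * k * (Nhat * (Gd (Qy (p * k)) * (- Qy (p * k) / ((1 - th) * p))))).
  apply (derivable_pt_lim_mult (fun p => (p - eta) * k) (fun p => Nhat * Gf (Qy (p * k)))).
  - apply is_derive_Reals. auto_derive; auto. ring.
  - apply (derivable_pt_lim_scal (fun p => Gf (Qy (p * k)))). exact Hc.
  - unfold Dv. field. lra.
Qed.

End S.

End P3.
Import P3.

Module P4.

Section S.
Variables (Nhat sg M th eta : R).
Hypothesis HN : 0 < Nhat.
Hypothesis Hsg : 0 < sg < 1.
Hypothesis HM : 0 < M.
Hypothesis Hth : 0 < th < 1.
Hypothesis Heta : 0 < eta.

Notation sf := (sf sg M).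
Notation Gf := (Gf sg M).
Notation Gd := (Gd sg M).
Notation Qy := (Qy th).
Notation Dv := (Dv Nhat sg M th eta).

Definition cc := (1 - sg + th) / (2 - sg).
Definition phi s := (th - cc * s) / (1 - s).
Definition Ky y := y * phi (sf (Qy y)).
Definition Dom y := 0 < y /\ Qy y < M /\ 0 < phi (sf (Qy y)).

Lemma sf_pos q : 0 < sf q.
Proof. unfold sf. apply Rdiv_lt_0_compat; apply Rpower_pos. Qed.

Lemma sf_lt q1 q2 : 0 < q1 < q2 -> sf q1 < sf q2.
Proof.
  intros H. unfold sf. assert (HB : 0 < Rpower M (1 - sg)) by apply Rpower_pos.
  apply Rmult_lt_compat_r. apply Rinv_0_lt_compat; auto. apply Rlt_Rpower_l; lra.
Qed.

Lemma sf_lt1 q : 0 < q < M -> sf q < 1.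
Proof. intros H. rewrite <- (sf_M sg M); auto. apply sf_lt; lra. Qed.

Lemma Qy_lt y1 y2 : 0 < y1 < y2 -> Qy y2 < Qy y1.
Proof.
  intros H. unfold Qy. apply Rlt_Rpower_l. apply Rdiv_lt_0_compat; lra.
  split. apply Rdiv_lt_0_compat; lra. unfold Rdiv. apply Rmult_lt_compat_l. lra.
  apply Rinv_lt_contravar; nra.
Qed.

Lemma cc_gt_th : th < cc.
Proof. unfold cc. apply Rmult_lt_reg_r with (2 - sg). lra. field_simplify; nra. Qed.
Lemma cc_lt1 : cc < 1.
Proof. unfold cc. apply Rmult_lt_reg_r with (2 - sg). lra. field_simplify; nra. Qed.

Lemma phi_alt s : s < 1 -> phi s = cc - ((1 - th) * (1 - sg) / (2 - sg)) / (1 - s).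
Proof. intros Hs. unfold phi, cc. field. lra. Qed.

Lemma phi_lt s1 s2 : s1 < s2 < 1 -> phi s2 < phi s1.
Proof.
  intros H. rewrite !phi_alt by lra.
  assert (He : 0 < (1 - th) * (1 - sg) / (2 - sg)).
  { apply Rdiv_lt_0_compat; [apply Rmult_lt_0_compat|]; lra. }
  apply Rplus_lt_compat_l. apply Ropp_lt_contravar. unfold Rdiv.
  apply Rmult_lt_compat_l; auto. apply Rinv_lt_contravar; nra.
Qed.

Lemma phi_lt1 s : 0 <= s < 1 -> phi s < 1.
Proof.
  intros H. rewrite phi_alt by lra.
  assert (He : 0 < (1 - th) * (1 - sg) / (2 - sg) / (1 - s)).
  { apply Rdiv_lt_0_compat; [apply Rdiv_lt_0_compat; [apply Rmult_lt_0_compat|]|]; lra. }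
  assert (H1 := cc_lt1). lra.
Qed.

Lemma Dv_flat k p : 0 < k -> 0 < p -> M <= Qy (p * k) -> 0 < Dv k p.
Proof.
  intros Hk Hp HQ. unfold P3.Dv, Gf, Gd, P2.Gf, P2.Gd. destruct (Rle_dec M (Qy (p * k))); [|lra].
  replace (M * (1 - sg) / (2 - sg) - (p - eta) * 0 * Qy (p * k) / ((1 - th) * p))
    with (M * (1 - sg) / (2 - sg)) by (field; lra).
  apply Rmult_lt_0_compat. nra. apply Rdiv_lt_0_compat; nra.
Qed.

Lemma Dv_form k p : 0 < k -> 0 < p -> Qy (p * k) < M ->
  Dv k p = Nhat * Qy (p * k) * (1 - sf (Qy (p * k))) / ((1 - th) * p) * (eta * k - Ky (p * k)).
Proof.
  intros Hk Hp HQ. assert (Hs := sf_lt1 (Qy (p * k)) (conj (Qy_pos th _) HQ)).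
  unfold P3.Dv, Gf, Gd, P2.Gf, P2.Gd, Ky, phi, cc. destruct (Rle_dec M (Qy (p * k))); [lra|].
  field. repeat split; lra.
Qed.

Lemma fac_pos k p : 0 < k -> 0 < p -> Qy (p * k) < M ->
  0 < Nhat * Qy (p * k) * (1 - sf (Qy (p * k))) / ((1 - th) * p).
Proof.
  intros Hk Hp HQ. assert (Hs := sf_lt1 (Qy (p * k)) (conj (Qy_pos th _) HQ)).
  assert (HQp := Qy_pos th (p * k)).
  apply Rdiv_lt_0_compat; [|nra]. apply Rmult_lt_0_compat; [|lra]. nra.
Qed.

Lemma Dv_nonDom k p : 0 < k -> 0 < p -> ~ Dom (p * k) -> 0 < Dv k p.
Proof.
  intros Hk Hp HD. destruct (Rle_dec M (Qy (p * k))) as [H|H].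
  - apply Dv_flat; auto.
  - rewrite Dv_form by (auto; lra). apply Rmult_lt_0_compat. apply fac_pos; auto; lra.
    assert (phi (sf (Qy (p * k))) <= 0).
    { apply Rnot_lt_le. intro. apply HD. split; [nra|]. split; auto; lra. }
    unfold Ky. assert (0 < p * k) by nra. assert (p * k * phi (sf (Qy (p*k))) <= 0) by nra. nra.
Qed.

Lemma Dom_up y1 y2 : Dom y1 -> y1 < y2 -> Dom y2.
Proof.
  intros [H1 [H2 H3]] H. assert (HQ := Qy_lt y1 y2 (conj H1 H)).
  assert (HQ2 := Qy_pos th y2). split; [lra|]. split; [lra|].
  apply Rlt_trans with (1 := H3). apply phi_lt. split. apply sf_lt; lra. apply sf_lt1; lra.
Qed.

Lemma Ky_lt y1 y2 : Dom y1 -> Dom y2 -> y1 < y2 -> Ky y1 < Ky y2.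
Proof.
  intros [H1 [H2 H3]] [H1' [H2' H3']] H. assert (HQ := Qy_lt y1 y2 (conj H1 H)).
  assert (HQ2 := Qy_pos th y2). unfold Ky.
  assert (phi (sf (Qy y1)) < phi (sf (Qy y2))).
  { apply phi_lt. split. apply sf_lt; lra. apply sf_lt1; lra. }
  nra.
Qed.

End S.

End P4.
Import P4.

Module P5.

Section S.
Variables (Nhat sg M th eta : R).
Hypothesis HN : 0 < Nhat.
Hypothesis Hsg : 0 < sg < 1.
Hypothesis HM : 0 < M.
Hypothesis Hth : 0 < th < 1.
Hypothesis Heta : 0 < eta.

Notation sf := (sf sg M).
Notation Qy := (Qy th).
Notation phi := (phi sg th).
Notation Ky := (Ky sg M th).
Notation Dom := (Dom sg M th).

Lemma aux_deriv (a B t c y : R) : 0 < y -> 0 < t -> B <> 0 -> exp (a * ln (t / y)) / B <> 1 ->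
  is_derive (fun y => y * ((t - c * (exp (a * ln (t / y)) / B)) / (1 - exp (a * ln (t / y)) / B))) y
    ((t - c * (exp (a * ln (t / y)) / B)) / (1 - exp (a * ln (t / y)) / B)
     - a * (exp (a * ln (t / y)) / B) * (t - c) / (1 - exp (a * ln (t / y)) / B) ^ 2).
Proof.
  intros Hy Ht HB Hs.
  assert (Hty: 0 < t * / y) by (apply Rmult_lt_0_compat; [lra| apply Rinv_0_lt_compat; lra]).
  assert (H1: 1 + - (exp (a * ln (t * / y)) * / B) <> 0) by (unfold Rdiv in Hs; intro; apply Hs; lra).
  auto_derive.
  - repeat split; (assumption || lra).
  - unfold Rdiv. set (E := exp (a * ln (t * / y))) in *. field. repeat split; try (assumption || lra).
    intro HE. apply H1. replace E with B by lra. field. exact HB.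
Qed.

Definition Kd y := phi (sf (Qy y)) + (1 - sg) * (1 - sg) * sf (Qy y) / ((2 - sg) * (1 - sf (Qy y)) ^ 2).

Lemma sfQ y : sf (Qy y) = Rpower (th / y) (1 / (1 - th) * (1 - sg)) / Rpower M (1 - sg).
Proof. unfold P2.sf, P2.Qy. rewrite Rpower_mult. reflexivity. Qed.

Lemma Ky_deriv y : 0 < y -> sf (Qy y) < 1 -> derivable_pt_lim Ky y (Kd y).
Proof.
  intros Hy Hs. assert (HB : 0 < Rpower M (1 - sg)) by apply Rpower_pos.
  unfold Kd. rewrite sfQ. rewrite sfQ in Hs.
  apply dpl_ext with (f := fun y => y * phi (Rpower (th / y) (1 / (1 - th) * (1 - sg)) / Rpower M (1 - sg))).
  { intros z. unfold P4.Ky. rewrite sfQ. reflexivity. }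
  apply is_derive_Reals. unfold P4.phi.
  set (B := Rpower M (1 - sg)) in *. set (a := 1 / (1 - th) * (1 - sg)) in *.
  assert (Hs' : exp (a * ln (th / y)) / B <> 1) by (change (Rpower (th/y) a / B <> 1); lra).
  assert (H := aux_deriv a B th (cc sg th) y Hy ltac:(lra) ltac:(lra) Hs').
  match type of H with is_derive _ _ ?l2 => match goal with |- is_derive _ _ ?l => replace l with l2; [exact H|] end end.
  unfold Rpower. set (E := exp (a * ln (th / y))) in *. unfold a, cc.
  field. repeat split; try lra. intro HE. apply Hs'. replace E with B by lra. field. lra.
Qed.


Lemma Kd_pos y : Dom y -> 0 < Kd y.
Proof.
  intros [H1 [H2 H3]]. unfold Kd.
  assert (Hs := sf_lt1 sg M Hsg (Qy y) (conj (Qy_pos th y) H2)).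
  assert (Hs0 := sf_pos sg M (Qy y)).
  assert (0 < (1 - sg) * (1 - sg) * sf (Qy y) / ((2 - sg) * (1 - sf (Qy y)) ^ 2)).
  { apply Rdiv_lt_0_compat. apply Rmult_lt_0_compat; nra. apply Rmult_lt_0_compat. lra. apply pow_lt; lra. }
  lra.
Qed.

Lemma sf_ge1 q : M <= q -> 1 <= sf q.
Proof.
  intros H. destruct (Req_dec q M). subst; rewrite sf_M; lra.
  rewrite <- (sf_M sg M) by lra. left. apply sf_lt; lra.
Qed.

Definition Ys s := th / Rpower (M * Rpower s (1 / (1 - sg))) (1 - th).

Lemma Ys_pos s : 0 < Ys s.
Proof. apply Rdiv_lt_0_compat. lra. apply Rpower_pos. Qed.

Lemma Qy_Ys s : 0 < s -> Qy (Ys s) = M * Rpower s (1 / (1 - sg)).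
Proof.
  intros Hs. unfold P2.Qy, Ys.
  assert (HR : 0 < Rpower (M * Rpower s (1 / (1 - sg))) (1 - th)) by apply Rpower_pos.
  replace (th / (th / Rpower (M * Rpower s (1 / (1 - sg))) (1 - th)))
    with (Rpower (M * Rpower s (1 / (1 - sg))) (1 - th)) by (field; lra).
  rewrite Rpower_mult. replace ((1 - th) * (1 / (1 - th))) with 1 by (field; lra).
  apply Rpower_1. apply Rmult_lt_0_compat; auto. apply Rpower_pos.
Qed.

Lemma sf_Ys s : 0 < s -> sf (Qy (Ys s)) = s.
Proof.
  intros Hs. rewrite Qy_Ys by auto. unfold P2.sf.
  rewrite <- Rpower_mult_distr by (auto; apply Rpower_pos).
  rewrite Rpower_mult. replace (1 / (1 - sg) * (1 - sg)) with 1 by (field; lra).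
  rewrite Rpower_1 by auto. field. apply Rgt_not_eq. apply Rpower_pos.
Qed.

Lemma Ky_exists k : 0 < k -> exists y, Dom y /\ Ky y = eta * k.
Proof.
  intros Hk.
  assert (Hcc := cc_gt_th sg th Hsg Hth). assert (Hcc1 := cc_lt1 sg th Hsg Hth).
  set (sN := th / cc sg th).
  assert (HsN : 0 < sN < 1).
  { unfold sN. split. apply Rdiv_lt_0_compat; lra. apply Rmult_lt_reg_r with (cc sg th). lra.
    field_simplify; lra. }
  assert (HphN : phi sN = 0). { unfold P4.phi, sN. field. split; [|lra]. intro. unfold sN in *. lra. }
  set (s2 := sN / 2).
  assert (Hph2 : 0 < phi s2). { rewrite <- HphN. apply phi_lt; auto. unfold s2; lra. }
  set (y1 := Ys sN). set (y2 := Ys s2 + eta * k / phi s2 + 1).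
  assert (Hy12 : Ys sN <= Ys s2).
  { apply Rnot_lt_le. intro H. assert (H' := Qy_lt th Hth (Ys s2) (Ys sN) (conj (Ys_pos _) H)).
    rewrite !Qy_Ys in H' by (unfold s2; lra).
    assert (Rpower s2 (1 / (1 - sg)) < Rpower sN (1 / (1 - sg))).
    { apply Rlt_Rpower_l. apply Rdiv_lt_0_compat; lra. unfold s2; lra. }
    nra. }
  assert (Hq2 : 0 < eta * k / phi s2) by (apply Rdiv_lt_0_compat; nra).
  assert (Hy1p : 0 < y1) by apply Ys_pos.
  assert (Hlt : y1 < y2) by (unfold y1, y2; lra).
  assert (Hcont : forall z, y1 <= z <= y2 -> continuity_pt (fun y => Ky y - eta * k) z).
  { intros z Hz. apply continuity_pt_minus; [|apply continuity_pt_const; intros ? ?; auto].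
    apply dpl_cont with (Kd z). apply Ky_deriv. lra.
    apply Rle_lt_trans with (sf (Qy y1)). destruct (Req_dec z y1). subst; lra.
    left. apply sf_lt; [exact Hsg|]. split. apply Qy_pos. apply Qy_lt; auto; lra.
    unfold y1. rewrite sf_Ys; lra. }
  assert (Hf1 : Ky y1 - eta * k < 0).
  { unfold P4.Ky, y1. rewrite sf_Ys by lra. rewrite HphN. nra. }
  assert (Hf2 : 0 < Ky y2 - eta * k).
  { unfold P4.Ky.
    assert (HQ : Qy y2 < Qy (Ys s2)) by (apply Qy_lt; auto; split; [apply Ys_pos|unfold y2; lra]).
    assert (Hs : sf (Qy y2) < s2).
    { rewrite <- (sf_Ys s2) by (unfold s2; lra). apply sf_lt; [exact Hsg|]. split; auto. apply Qy_pos. }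
    assert (phi s2 < phi (sf (Qy y2))).
    { apply phi_lt; auto. split; auto. unfold s2; lra. }
    assert (eta * k / phi s2 * phi s2 = eta * k) by (field; lra).
    assert (y2 * phi s2 > eta * k) by (unfold y2; rewrite !Rmult_plus_distr_r; assert (0 < Ys s2 * phi s2) by (apply Rmult_lt_0_compat; auto; apply Ys_pos); lra).
    nra. }
  destruct (Ranalysis5.IVT_interv (fun y => Ky y - eta * k) y1 y2 Hcont Hlt Hf1 Hf2) as [z [Hz Hfz]].
  exists z. assert (Hzp : 0 < z) by lra.
  assert (Hsz : sf (Qy z) < 1).
  { apply Rle_lt_trans with (sf (Qy y1)). destruct (Req_dec z y1). subst; lra.
    left. apply sf_lt; [exact Hsg|]. split. apply Qy_pos. apply Qy_lt; auto; lra.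
    unfold y1. rewrite sf_Ys; lra. }
  split; [|lra]. split; auto. split.
  - apply Rnot_le_lt. intro H. apply sf_ge1 in H. lra.
  - unfold P4.Ky in Hfz. apply Rmult_lt_reg_l with z; auto. nra.
Qed.

End S.

End P5.
Import P5.

Module P6.

Lemma alg_bound U q e d eps : 0 < d -> 0 < eps -> Rabs (U - e) < eps * d / 4 ->
  Rabs (q - d) < Rmin (d / 2) (eps * d * d / (4 * (Rabs e + 1))) ->
  Rabs (U / q - e / d) < eps.
Proof.
  intros Hd He HU Hq.
  assert (Hq1 : Rabs (q - d) < d / 2) by (eapply Rlt_le_trans; [exact Hq| apply Rmin_l]).
  assert (Hq2 : Rabs (q - d) < eps * d * d / (4 * (Rabs e + 1))) by (eapply Rlt_le_trans; [exact Hq| apply Rmin_r]).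
  assert (Hqp : d / 2 < q) by (apply Rabs_def2 in Hq1; lra).
  assert (HE : 0 <= Rabs e) by apply Rabs_pos.
  assert (Hq3 : Rabs e * Rabs (q - d) <= eps * d * d / 4).
  { assert (Rabs (q - d) * (4 * (Rabs e + 1)) < eps * d * d).
    { apply Rmult_lt_reg_r with (/ (4 * (Rabs e + 1))). apply Rinv_0_lt_compat; lra.
      rewrite Rmult_assoc, Rinv_r by lra. lra. }
    assert (0 <= Rabs (q - d)) by apply Rabs_pos. nra. }
  set (X := U / q - e / d).
  assert (HX : X * (q * d) = (U - e) * d + e * (d - q)) by (unfold X; field; lra).
  assert (HXa : Rabs X * (q * d) <= Rabs (U - e) * d + Rabs e * Rabs (q - d)).
  { replace (Rabs X * (q * d)) with (Rabs (X * (q * d))).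
    rewrite HX. eapply Rle_trans. apply Rabs_triang. rewrite !Rabs_mult.
    rewrite (Rabs_pos_eq d) by lra. rewrite <- Rabs_Ropp with (x := d - q).
    replace (- (d - q)) with (q - d) by ring. lra.
    rewrite Rabs_mult. rewrite (Rabs_pos_eq (q * d)) by nra. reflexivity. }
  assert (0 <= Rabs (U - e)) by apply Rabs_pos.
  assert (Rabs (U - e) * d < eps * d / 4 * d) by (apply Rmult_lt_compat_r; lra).
  destruct (Rlt_or_le (Rabs X) eps) as [Hlt|Hge]; auto.
  exfalso. assert (eps * (q * d) <= Rabs X * (q * d)) by (apply Rmult_le_compat_r; nra).
  nra.
Qed.

Lemma dpl_cont_eps f x l : derivable_pt_lim f x l ->
  forall eps, 0 < eps -> exists del, 0 < del /\ forall y, Rabs (y - x) < del -> Rabs (f y - f x) < eps.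
Proof.
  intros H eps Heps. destruct (dpl_cont f x l H eps Heps) as [a [Ha Ha']].
  exists a. split; auto. intros y Hy. destruct (Req_dec y x).
  - subst. replace (f x - f x) with 0 by ring. rewrite Rabs_R0; lra.
  - apply (Ha' y). split. split. exact I. auto. exact Hy.
Qed.

Lemma inv_deriv2 (f g ph : R -> R) (D : R -> Prop) x0 k0 d e r r2 :
  (forall x y, D x -> D y -> x < y -> f x < f y) ->
  0 < r -> (forall x, Rabs (x - x0) < r -> D x) ->
  derivable_pt_lim f x0 d -> 0 < d ->
  derivable_pt_lim ph k0 e ->
  g k0 = x0 -> f x0 = ph k0 ->
  0 < r2 -> (forall k, Rabs (k - k0) < r2 -> D (g k) /\ f (g k) = ph k /\ (k <> k0 -> ph k <> ph k0)) ->
  derivable_pt_lim g k0 (e / d).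
Proof.
  intros Hmono Hr HD Hf Hd Hph Hg0 Hf0 Hr2 Hk.
  assert (Hcont : forall eps, 0 < eps -> exists del, 0 < del /\ forall k, Rabs (k - k0) < del -> Rabs (g k - x0) < eps).
  { intros eps Heps. set (ep := Rmin eps r / 2).
    assert (Hep : 0 < ep) by (unfold ep; assert (0 < Rmin eps r) by (apply Rmin_pos; lra); lra).
    assert (Hep2 : ep < eps /\ ep < r) by (unfold ep; split; [assert (Rmin eps r <= eps) by apply Rmin_l|assert (Rmin eps r <= r) by apply Rmin_r]; lra).
    assert (HDm : D (x0 - ep)) by (apply HD; replace (x0 - ep - x0) with (- ep) by ring; rewrite Rabs_Ropp, Rabs_pos_eq; lra).
    assert (HDp : D (x0 + ep)) by (apply HD; replace (x0 + ep - x0) with ep by ring; rewrite Rabs_pos_eq; lra).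
    assert (HD0 : D x0) by (apply HD; replace (x0 - x0) with 0 by ring; rewrite Rabs_R0; lra).
    assert (Hlo : f (x0 - ep) < f x0) by (apply Hmono; auto; lra).
    assert (Hhi : f x0 < f (x0 + ep)) by (apply Hmono; auto; lra).
    destruct (dpl_cont_eps ph k0 e Hph (Rmin (f x0 - f (x0 - ep)) (f (x0 + ep) - f x0))) as [d3 [Hd3 Hd3']].
    { apply Rmin_pos; lra. }
    exists (Rmin d3 r2). split. apply Rmin_pos; lra.
    intros k Hkk. assert (Hk3 : Rabs (k - k0) < d3) by (eapply Rlt_le_trans; [exact Hkk|apply Rmin_l]).
    assert (Hk2 : Rabs (k - k0) < r2) by (eapply Rlt_le_trans; [exact Hkk|apply Rmin_r]).
    destruct (Hk k Hk2) as [HDg [Hfg _]].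
    assert (H3 := Hd3' k Hk3). rewrite <- Hf0 in H3.
    assert (Hm1 := Rmin_l (f x0 - f (x0 - ep)) (f (x0 + ep) - f x0)).
    assert (Hm2 := Rmin_r (f x0 - f (x0 - ep)) (f (x0 + ep) - f x0)).
    apply Rabs_def2 in H3. destruct H3 as [H3a H3b].
    apply Rabs_def1.
    - destruct (Rlt_or_le (g k - x0) eps) as [Hl|Hl]; auto. exfalso.
      destruct (Req_dec (g k) (x0 + ep)) as [E|E].
      + rewrite E in Hfg. lra.
      + assert (f (x0 + ep) < f (g k)) by (apply Hmono; auto; lra). lra.
    - destruct (Rlt_or_le (- eps) (g k - x0)) as [Hl|Hl]; auto. exfalso.
      destruct (Req_dec (g k) (x0 - ep)) as [E|E].
      + rewrite E in Hfg. lra.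
      + assert (f (g k) < f (x0 - ep)) by (apply Hmono; auto; lra). lra. }
  intros eps Heps.
  set (eps1 := Rmin (d / 2) (eps * d * d / (4 * (Rabs e + 1)))).
  assert (He1 : 0 < eps1).
  { unfold eps1. apply Rmin_pos. lra. apply Rdiv_lt_0_compat. apply Rmult_lt_0_compat; [apply Rmult_lt_0_compat|]; lra.
    assert (0 <= Rabs e) by apply Rabs_pos. lra. }
  destruct (Hf eps1 He1) as [d1 Hd1].
  assert (He2 : 0 < eps * d / 4) by (apply Rdiv_lt_0_compat; [apply Rmult_lt_0_compat|]; lra).
  destruct (Hph _ He2) as [d2 Hd2].
  destruct (Hcont d1 (cond_pos d1)) as [dc [Hdc Hdc']].
  assert (Hdel : 0 < Rmin dc (Rmin d2 r2)) by (apply Rmin_pos; [lra|apply Rmin_pos; [apply cond_pos|lra]]).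
  exists (mkposreal _ Hdel). intros z Hz0 Hz. simpl in Hz.
  assert (Hzc : Rabs z < dc) by (eapply Rlt_le_trans; [exact Hz|apply Rmin_l]).
  assert (Hz2 : Rabs z < d2) by (eapply Rlt_le_trans; [exact Hz|eapply Rle_trans; [apply Rmin_r|apply Rmin_l]]).
  assert (Hzr : Rabs z < r2) by (eapply Rlt_le_trans; [exact Hz|eapply Rle_trans; [apply Rmin_r|apply Rmin_r]]).
  set (k := k0 + z).
  assert (Hkz : k - k0 = z) by (unfold k; ring).
  destruct (Hk k ltac:(rewrite Hkz; exact Hzr)) as [HDg [Hfg Hne]].
  assert (Hu : ph k - ph k0 <> 0) by (apply Rminus_eq_contra, Hne; unfold k; lra).
  set (t := g k - x0).
  assert (Ht : t <> 0). { intro E. apply Hu. unfold t in E. replace (g k) with x0 in Hfg by lra. lra. }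
  assert (Htd : Rabs t < d1) by (unfold t; apply Hdc'; rewrite Hkz; exact Hzc).
  assert (Hq := Hd1 t Ht Htd). replace (x0 + t) with (g k) in Hq by (unfold t; ring).
  rewrite Hfg, Hf0 in Hq.
  assert (HU := Hd2 z Hz0 Hz2). fold k in HU.
  rewrite Hg0. fold k. fold t.
  replace (t / z) with (((ph k - ph k0) / z) / ((ph k - ph k0) / t)) by (field; auto).
  apply alg_bound; auto.
Qed.

End P6.
Import P6.

Module P7.

Lemma glb_approx (S : R -> Prop) m : is_glb S m -> forall e, 0 < e -> exists x, S x /\ x < m + e.
Proof.
  intros [H1 H2] e He. apply NNPP. intro Hn.
  assert (m + e <= m). { apply H2. intros x Hx. apply Rnot_lt_le. intro. apply Hn. exists x; auto. }
  lra.
Qed.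

Lemma glb_ge (S : R -> Prop) m a : is_glb S m -> (forall x, S x -> a < x) -> a <= m.
Proof. intros [H1 H2] H. apply H2. intros x Hx. left. auto. Qed.

Lemma glb_unique (S : R -> Prop) m1 m2 : is_glb S m1 -> is_glb S m2 -> m1 = m2.
Proof. intros [H1 H2] [H3 H4]. apply Rle_antisym; auto. Qed.

Lemma glb_exists (S : R -> Prop) a : (exists x, S x) -> (forall x, S x -> a <= x) -> exists m, is_glb S m.
Proof.
  intros [x0 Hx0] Ha.
  destruct (completeness (fun y => S (- y))) as [m [Hm1 Hm2]].
  - exists (- a). intros y Hy. apply Ha in Hy. lra.
  - exists (- x0). rewrite Ropp_involutive. auto.
  - exists (- m). split.
    + intros x Hx. assert (- x <= m) by (apply Hm1; rewrite Ropp_involutive; auto). lra.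
    + intros m' Hm'. assert (m <= - m').
      { apply Hm2. intros y Hy. apply Hm' in Hy. lra. }
      lra.
Qed.

Section T.
Variables (n : nat) (w : nat -> R) (Nhat sg M th eta : R).
Hypothesis Hwsum : sumT n w = 1.
Hypothesis HN : 0 < Nhat.
Hypothesis Hsg : 0 < sg < 1.
Hypothesis HM : 0 < M.
Hypothesis Hth : 0 < th < 1.
Hypothesis Heta : 0 < eta.

Notation sf := (sf sg M).
Notation Gf := (Gf sg M).
Notation Gd := (Gd sg M).
Notation Qy := (Qy th).
Notation phi := (phi sg th).
Notation Ky := (Ky sg M th).
Notation Dom := (Dom sg M th).
Notation Dv := (Dv Nhat sg M th eta).
Notation Kd := (Kd sg M th).

Lemma RevE k p : Rev n w Nhat sg M th k eta p = (p - eta) * k * (Nhat * Gf (Qy (p * k))).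
Proof. unfold Rev. rewrite (Xtot_eq n w Nhat sg M th Hwsum Hsg HM). reflexivity. Qed.

Lemma Rev_deriv k p : 0 < k -> 0 < p -> derivable_pt_lim (Rev n w Nhat sg M th k eta) p (Dv k p).
Proof.
  intros Hk Hp. apply dpl_ext with (f := fun p => (p - eta) * k * (Nhat * Gf (Qy (p * k)))).
  intro z. rewrite RevE. reflexivity. apply Revf_deriv; auto.
Qed.

Lemma X_deriv k p : 0 < k -> 0 < p ->
  derivable_pt_lim (fun p => Gf (Qy (p * k))) p (Gd (Qy (p * k)) * (- Qy (p * k) / ((1 - th) * p))).
Proof.
  intros Hk Hp. apply (derivable_pt_lim_comp (fun p => Qy (p * k)) Gf). apply Qyk_deriv; auto.
  apply Gf_deriv; auto. apply Qy_pos.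
Qed.

Definition g1 q := q * (1 - sf q / (2 - sg)).
Definition Gmax := M * (1 - sg) / (2 - sg).

Lemma Gf_g1 q : q <= M -> Gf q = g1 q.
Proof.
  intros H. unfold P2.Gf, g1. destruct (Rle_dec M q).
  - assert (q = M) by lra. subst. rewrite sf_M. field. lra.
  - reflexivity.
Qed.

Lemma g1_lt q1 q2 : 0 < q1 < q2 -> q2 <= M -> g1 q1 < g1 q2.
Proof.
  intros H H2. destruct (MVT_cor2 g1 (fun q => 1 - sf q) q1 q2) as [c [Hc1 Hc2]]. lra.
  { intros c Hc. apply g1_deriv; auto; lra. }
  assert (sf c < 1) by (apply sf_lt1; auto; lra). nra.
Qed.

Lemma Gf_lt q1 q2 : 0 < q1 < q2 -> q1 < M -> Gf q1 < Gf q2.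
Proof.
  intros H H1. rewrite Gf_g1 by lra. destruct (Rle_dec q2 M).
  - rewrite Gf_g1 by lra. apply g1_lt; lra.
  - unfold P2.Gf at 1. destruct (Rle_dec M q2); [|lra].
    replace (M * (1 - sg) / (2 - sg)) with (g1 M). apply g1_lt; lra.
    unfold g1. rewrite sf_M. field. lra.
Qed.

Lemma Gf_le q1 q2 : 0 < q1 <= q2 -> Gf q1 <= Gf q2.
Proof.
  intros H. destruct (Req_dec q1 q2). subst; lra.
  destruct (Rlt_dec q1 M). left. apply Gf_lt; lra.
  unfold P2.Gf. destruct (Rle_dec M q1); destruct (Rle_dec M q2); lra.
Qed.

Lemma Gf_pos q : 0 < q -> 0 < Gf q.
Proof.
  intros Hq. unfold P2.Gf. destruct (Rle_dec M q).
  - apply Rdiv_lt_0_compat; nra.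
  - assert (sf q < 1) by (apply sf_lt1; auto; lra). apply Rmult_lt_0_compat; auto.
    assert (sf q / (2 - sg) < 1) by (apply Rmult_lt_reg_r with (2 - sg); [lra|]; field_simplify; lra). lra.
Qed.

Lemma Gf_le_id q : 0 < q -> Gf q <= q.
Proof.
  intros Hq. unfold P2.Gf. destruct (Rle_dec M q).
  - apply Rle_trans with M; auto. apply Rmult_le_reg_r with (2 - sg). lra. field_simplify; nra.
  - assert (0 < sf q) by apply sf_pos.
    assert (0 < sf q / (2 - sg)) by (apply Rdiv_lt_0_compat; lra). nra.
Qed.

Lemma Gf_max q : 0 < q < M -> Gf q < Gmax.
Proof.
  intros H. replace Gmax with (Gf M). apply Gf_lt; lra.
  unfold P2.Gf, Gmax. destruct (Rle_dec M M); lra.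
Qed.

Lemma Gf_eqmax q : M <= q -> Gf q = Gmax.
Proof. intros H. unfold P2.Gf, Gmax. destruct (Rle_dec M q); lra. Qed.

Lemma Xle k p1 p2 : 0 < k -> 0 < p1 <= p2 -> Gf (Qy (p2 * k)) <= Gf (Qy (p1 * k)).
Proof.
  intros Hk H. destruct (Req_dec p1 p2). subst; lra.
  apply Gf_le. split. apply Qy_pos. left. apply Qy_lt; auto. split; nra.
Qed.

Lemma Xlt k p1 p2 : 0 < k -> 0 < p1 < p2 -> Qy (p2 * k) < M -> Gf (Qy (p2 * k)) < Gf (Qy (p1 * k)).
Proof.
  intros Hk H HQ. apply Gf_lt; auto. split. apply Qy_pos. apply Qy_lt; auto. split; nra.
Qed.

Section Crit.
Variables (k ys : R).
Hypothesis Hk : 0 < k.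
Hypothesis Hys : Dom ys.
Hypothesis HKy : Ky ys = eta * k.

Lemma ys_gt : eta * k < ys.
Proof.
  destruct Hys as [H1 [H2 H3]]. rewrite <- HKy. unfold P4.Ky.
  assert (phi (sf (Qy ys)) < 1).
  { apply phi_lt1; auto. split. left; apply sf_pos. apply sf_lt1; auto. split; auto. apply Qy_pos. }
  nra.
Qed.

Lemma Dv_lt p : 0 < p -> p * k < ys -> 0 < Dv k p.
Proof.
  intros Hp H. destruct (classic (Dom (p * k))) as [HD|HD].
  - rewrite Dv_form; auto. apply Rmult_lt_0_compat. apply fac_pos; auto. destruct HD as [_ [HD _]]; auto.
    rewrite <- HKy. assert (Ky (p * k) < Ky ys) by (apply Ky_lt; auto). lra.
    destruct HD as [_ [HD _]]; auto.
  - apply Dv_nonDom; auto.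
Qed.

Lemma Dv_gt p : 0 < p -> ys < p * k -> Dv k p < 0.
Proof.
  intros Hp H. assert (HD : Dom (p * k)) by (apply Dom_up with ys; auto).
  assert (HQ : Qy (p * k) < M) by (destruct HD as [_ [HD _]]; auto).
  rewrite Dv_form; auto.
  assert (Ky ys < Ky (p * k)) by (apply Ky_lt; auto).
  assert (0 < Nhat * Qy (p * k) * (1 - sf (Qy (p * k))) / ((1 - th) * p)) by (apply fac_pos; auto).
  nra.
Qed.

Lemma Dv_eq p : 0 < p -> p * k = ys -> Dv k p = 0.
Proof.
  intros Hp H. assert (HQ : Qy (p * k) < M) by (rewrite H; destruct Hys as [_ [HD _]]; auto).
  rewrite Dv_form; auto. rewrite H, HKy. ring.
Qed.

Lemma crit_unique p : 0 < p -> Dv k p = 0 -> p * k = ys.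
Proof.
  intros Hp H. destruct (Rtotal_order (p * k) ys) as [H1|[H1|H1]]; auto.
  - assert (H2 := Dv_lt p Hp H1). lra.
  - assert (H2 := Dv_gt p Hp H1). lra.
Qed.

Lemma Rev_incr a b : 0 < a -> a < b -> b * k <= ys ->
  Rev n w Nhat sg M th k eta a < Rev n w Nhat sg M th k eta b.
Proof.
  intros Ha Hab Hb. destruct (MVT_cor2 (Rev n w Nhat sg M th k eta) (Dv k) a b Hab) as [c [Hc1 Hc2]].
  { intros c Hc. apply Rev_deriv; auto; lra. }
  assert (0 < Dv k c) by (apply Dv_lt; nra). nra.
Qed.

Lemma Rev_decr a b : 0 < a -> a < b -> ys <= a * k ->
  Rev n w Nhat sg M th k eta b < Rev n w Nhat sg M th k eta a.
Proof.
  intros Ha Hab Hb. destruct (MVT_cor2 (Rev n w Nhat sg M th k eta) (Dv k) a b Hab) as [c [Hc1 Hc2]].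
  { intros c Hc. apply Rev_deriv; auto; lra. }
  assert (Dv k c < 0) by (apply Dv_gt; nra). nra.
Qed.

End Crit.

Lemma Rev_pos k p : 0 < k -> (0 < Rev n w Nhat sg M th k eta p <-> eta < p).
Proof.
  intros Hk. rewrite RevE. assert (HG := Gf_pos (Qy (p * k)) (Qy_pos th _)).
  assert (HP : 0 < k * (Nhat * Gf (Qy (p * k)))) by (apply Rmult_lt_0_compat; auto; apply Rmult_lt_0_compat; auto).
  replace ((p - eta) * k * (Nhat * Gf (Qy (p * k)))) with ((p - eta) * (k * (Nhat * Gf (Qy (p * k))))) by ring.
  split; intro H. nra. nra.
Qed.

Lemma Pset_iff k kp C p : 0 < k ->
  (Pset n w Nhat sg M th k kp eta C p <-> eta < p /\ kp * (Nhat * Gf (Qy (p * k))) <= C).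
Proof.
  intros Hk. unfold Pset, Apeak. rewrite (Xtot_eq n w Nhat sg M th Hwsum Hsg HM). rewrite Rev_pos; auto. tauto.
Qed.

Lemma Pset_ne k kp C : 0 < k -> 0 < kp -> 0 < C -> exists p, Pset n w Nhat sg M th k kp eta C p.
Proof.
  intros Hk Hkp HC. set (e := C / (kp * Nhat)).
  assert (He : 0 < e) by (apply Rdiv_lt_0_compat; nra).
  set (R1 := Rpower e (1 - th)). assert (HR1 : 0 < R1) by apply Rpower_pos.
  exists (eta + th / (k * R1)). rewrite Pset_iff by auto.
  assert (H1 : 0 < th / (k * R1)) by (apply Rdiv_lt_0_compat; nra).
  split. lra.
  set (p := eta + th / (k * R1)).
  assert (Hpk : th / (p * k) <= R1).
  { assert (Hpk2 : p * k = eta * k + th / R1) by (unfold p; field; lra).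
    assert (Hpk3 : 0 < p * k) by (rewrite Hpk2; assert (0 < th / R1) by (apply Rdiv_lt_0_compat; lra); nra).
    apply Rmult_le_reg_r with (p * k); [lra|]. assert (0 < p) by (unfold p; lra). replace (th / (p * k) * (p * k)) with th by (field; split; lra).
    rewrite Hpk2. replace (R1 * (eta * k + th / R1)) with (R1 * eta * k + th) by (field; lra).
    assert (0 < R1 * eta * k) by (apply Rmult_lt_0_compat; [apply Rmult_lt_0_compat|]; lra). lra. }
  assert (HQ : Qy (p * k) <= e).
  { unfold P2.Qy. apply Rle_trans with (Rpower R1 (1 / (1 - th))).
    apply Rle_Rpower_l. left; apply Rdiv_lt_0_compat; lra. split; auto.
    apply Rdiv_lt_0_compat. lra. unfold p; nra.
    unfold R1. rewrite Rpower_mult. replace ((1 - th) * (1 / (1 - th))) with 1 by (field; lra).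
    rewrite Rpower_1; lra. }
  assert (HG := Gf_le_id (Qy (p * k)) (Qy_pos th _)).
  assert (Nhat * Gf (Qy (p * k)) <= Nhat * e) by (apply Rmult_le_compat_l; lra).
  assert (kp * (Nhat * e) = C) by (unfold e; field; lra).
  assert (kp * (Nhat * Gf (Qy (p * k))) <= kp * (Nhat * e)) by (apply Rmult_le_compat_l; lra).
  lra.
Qed.

Lemma Dom_iff : exists a, 0 < a /\ forall y, Dom y <-> a < y.
Proof.
  assert (Hcc := cc_gt_th sg th Hsg Hth). assert (Hcc1 := cc_lt1 sg th Hsg Hth).
  set (sN := th / cc sg th).
  assert (HsN : 0 < sN < 1).
  { unfold sN. split. apply Rdiv_lt_0_compat; lra. apply Rmult_lt_reg_r with (cc sg th). lra.
    field_simplify; lra. }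
  assert (HphN : phi sN = 0). { unfold P4.phi, sN. field. split; [|lra]. intro. unfold sN in *. lra. }
  exists (Ys sg M th sN). split. apply Ys_pos; auto.
  assert (HsY : sf (Qy (Ys sg M th sN)) = sN) by (apply sf_Ys; auto; lra).
  intros y. split.
  - intros [H1 [H2 H3]]. apply Rnot_le_lt. intro H.
    destruct (Req_dec y (Ys sg M th sN)) as [E|E].
    + rewrite E, HsY, HphN in H3. lra.
    + assert (Qy (Ys sg M th sN) < Qy y) by (apply Qy_lt; auto; lra).
      assert (sN < sf (Qy y)) by (rewrite <- HsY; apply sf_lt; auto; split; [apply Qy_pos|auto]).
      assert (phi (sf (Qy y)) < phi sN) by (apply phi_lt; auto; split; auto; apply sf_lt1; auto; split; [apply Qy_pos|auto]).
      lra.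
  - intros H. assert (HY := Ys_pos sg M th Hth sN).
    assert (HQ : Qy y < Qy (Ys sg M th sN)) by (apply Qy_lt; auto; lra).
    assert (Hs : sf (Qy y) < sN) by (rewrite <- HsY; apply sf_lt; auto; split; [apply Qy_pos|auto]).
    split. lra. split.
    + apply Rnot_le_lt. intro H'. assert (H'' := sf_ge1 sg M Hsg HM _ H'). lra.
    + rewrite <- HphN. apply phi_lt; auto. lra.
Qed.

Lemma A_cont k kp m : 0 < k -> 0 < m ->
  forall e, 0 < e -> exists d, 0 < d /\ forall y, Rabs (y - m) < d ->
    Rabs (kp * (Nhat * Gf (Qy (y * k))) - kp * (Nhat * Gf (Qy (m * k)))) < e.
Proof.
  intros Hk Hm. apply (dpl_cont_eps (fun p => kp * (Nhat * Gf (Qy (p * k)))) m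
    (kp * (Nhat * (Gd (Qy (m * k)) * (- Qy (m * k) / ((1 - th) * m)))))).
  apply (derivable_pt_lim_scal (fun p => Nhat * Gf (Qy (p * k)))).
  apply (derivable_pt_lim_scal (fun p => Gf (Qy (p * k)))). apply X_deriv; auto.
Qed.

Lemma glb_boundary k kp C m : 0 < k -> 0 < kp ->
  is_glb (Pset n w Nhat sg M th k kp eta C) m -> eta < m ->
  kp * (Nhat * Gf (Qy (m * k))) = C.
Proof.
  intros Hk Hkp Hg Hm.
  destruct (Rtotal_order (kp * (Nhat * Gf (Qy (m * k)))) C) as [H|[H|H]]; auto; exfalso.
  - destruct (A_cont k kp m Hk ltac:(lra) (C - kp * (Nhat * Gf (Qy (m * k))))) as [d [Hd Hd']]. lra.
    set (p := Rmax (m - d / 2) ((eta + m) / 2)).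
    assert (Hp1 : m - d / 2 <= p) by apply Rmax_l. assert (Hp2 : (eta + m) / 2 <= p) by apply Rmax_r.
    assert (Hp3 : p < m) by (unfold p; apply Rmax_lub_lt; lra).
    assert (HP : Pset n w Nhat sg M th k kp eta C p).
    { rewrite Pset_iff by auto. split. lra.
      assert (Hd2 := Hd' p ltac:(rewrite Rabs_left by lra; lra)). apply Rabs_def2 in Hd2. lra. }
    destruct Hg as [Hg1 _]. apply Hg1 in HP. lra.
  - destruct (A_cont k kp m Hk ltac:(lra) (kp * (Nhat * Gf (Qy (m * k))) - C)) as [d [Hd Hd']]. lra.
    destruct (glb_approx _ _ Hg d Hd) as [x [Hx1 Hx2]].
    assert (Hxm : m <= x) by (destruct Hg as [Hg1 _]; auto).
    rewrite Pset_iff in Hx1 by auto. destruct Hx1 as [_ Hx1].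
    assert (Hd2 := Hd' x ltac:(rewrite Rabs_pos_eq by lra; lra)). apply Rabs_def2 in Hd2. lra.
Qed.

End T.

End P7.
Import P7.

Theorem proposition2
  (n : nat) (w : nat -> R)
  (Nhat C sigma Phimax theta kavg kpeak eta : R)
  (Hn : (1 <= n)%nat)
  (Hw : forall t, (t < n)%nat -> 0 < w t)
  (Hwsum : sumT n w = 1)
  (HNhat : 0 < Nhat) (HC : 0 < C)
  (Hsigma : 0 < sigma < 1) (HPhimax : 0 < Phimax)
  (Htheta : 0 < theta < 1)
  (Hkavg : 0 < kavg <= 1) (Hkpeak : 0 < kpeak <= 1)
  (Heta : 0 < eta) :
  let R_ := Rev n w Nhat sigma Phimax theta kavg eta in
  let A_ := Apeak n w Nhat sigma Phimax theta kavg kpeak in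
  let P_ := Pset n w Nhat sigma Phimax theta kavg kpeak eta C in
  let Eq_ := is_equilibrium n w Nhat sigma Phimax theta kavg kpeak eta C in
  (* (i) unimodality of R on [eta, oo); P non-empty and connected *)
  ( (exists ph, eta < ph /\
       (forall p, eta <= p < ph -> exists l, derivable_pt_lim R_ p l /\ 0 < l) /\
       derivable_pt_lim R_ ph 0 /\
       (forall p, ph < p -> exists l, derivable_pt_lim R_ p l /\ l < 0)) /\
    (exists p, P_ p) /\ interval_set P_ )
  /\
  (* (ii) R'(p0) < 0 : opt-saturated, p* = p0, A(p0) = C, d p0 / d kpeak > 0 *)
  (forall p0 l, is_glb P_ p0 -> derivable_pt_lim R_ p0 l -> l < 0 ->
     (forall p, Eq_ p <-> p = p0) /\
     A_ p0 = C /\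
     (exists g : R -> R, forall k, 0 < k ->
        is_glb (Pset n w Nhat sigma Phimax theta kavg k eta C) (g k)) /\
     (forall g : R -> R,
        (forall k, 0 < k -> is_glb (Pset n w Nhat sigma Phimax theta kavg k eta C) (g k)) ->
        exists d, derivable_pt_lim g kpeak d /\ 0 < d))
  /\
  (* (iii) R'(p0) > 0 : opt-unsaturated, p* solves R'(p) = 0,
     d (p*(kavg) kavg) / d kavg > 0 *)
  (forall p0 l, is_glb P_ p0 -> derivable_pt_lim R_ p0 l -> 0 < l ->
     exists pstar,
       (forall p, Eq_ p <-> p = pstar) /\
       A_ pstar <> C /\
       derivable_pt_lim R_ pstar 0 /\
       (exists g : R -> R, forall k, 0 < k ->
          eta < g k /\
          derivable_pt_lim (Rev n w Nhat sigma Phimax theta k eta) (g k) 0) /\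
       (forall g : R -> R,
          (forall k, 0 < k ->
             eta < g k /\
             derivable_pt_lim (Rev n w Nhat sigma Phimax theta k eta) (g k) 0) ->
          g kavg = pstar /\
          exists d, derivable_pt_lim (fun k => g k * k) kavg d /\ 0 < d)).
Proof.
  cbv zeta.
  set (sg := sigma) in *. set (M := Phimax) in *. set (th := theta) in *.
  assert (Hk : 0 < kavg) by lra. assert (Hkp : 0 < kpeak) by lra.
  pose proof (Rev_deriv n w Nhat sg M th eta Hwsum Hsigma HPhimax Htheta) as RD.
  pose proof (Pset_iff n w Nhat sg M th eta Hwsum HNhat Hsigma HPhimax Htheta) as PI.
  destruct (Ky_exists sg M th eta Hsigma HPhimax Htheta Heta kavg Hk) as [ys [Hys HKy]].
  assert (Hysg := ys_gt sg M th eta Hsigma Htheta kavg ys Hys HKy).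
  pose proof (Dv_lt Nhat sg M th eta HNhat Hsigma HPhimax Htheta Heta kavg ys Hk Hys HKy) as DL.
  assert (DG : forall p, 0 < p -> ys < p * kavg -> Dv Nhat sg M th eta kavg p < 0).
  { intros; eapply Dv_gt; eauto. }
  assert (DE : forall p, 0 < p -> p * kavg = ys -> Dv Nhat sg M th eta kavg p = 0).
  { intros; eapply Dv_eq; eauto. }
  set (ph := ys / kavg).
  assert (Hphk : ph * kavg = ys) by (unfold ph; field; lra).
  assert (Hph_eta : eta < ph) by (apply Rmult_lt_reg_r with kavg; lra).
  assert (HysM : Qy th ys < M) by (destruct Hys as [_ [H _]]; exact H).
  assert (HPeta : forall x, Pset n w Nhat sg M th kavg kpeak eta C x -> eta < x).
  { intros x Hx. apply PI in Hx; auto. tauto. }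
  split; [|split].
  - split.
    + exists ph. split; auto. split; [|split].
      * intros p Hp. exists (Dv Nhat sg M th eta kavg p). split. apply RD; lra.
        apply DL. lra. rewrite <- Hphk. apply Rmult_lt_compat_r; lra.
      * rewrite <- (DE ph) by (lra || auto). apply RD; lra.
      * intros p Hp. exists (Dv Nhat sg M th eta kavg p). split. apply RD; lra.
        apply DG. lra. rewrite <- Hphk. apply Rmult_lt_compat_r; lra.
    + split. apply (Pset_ne n w Nhat sg M th eta Hwsum HNhat Hsigma HPhimax Htheta Heta); lra.
      intros a b c Ha Hc Hab Hbc. apply PI in Ha; auto. apply PI in Hc; auto. apply PI; auto.
      split. lra.
      assert (Gf sg M (Qy th (b * kavg)) <= Gf sg M (Qy th (a * kavg))) by (apply Xle; auto; lra).
      assert (0 < kpeak * Nhat) by nra. nra.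
  - intros p0 l Hglb Hder Hl.
    assert (Hne := Pset_ne n w Nhat sg M th eta Hwsum HNhat Hsigma HPhimax Htheta Heta kavg kpeak C Hk Hkp HC).
    assert (Hp0eta : eta <= p0) by (apply (glb_ge _ _ _ Hglb HPeta)).
    assert (Hl' : l = Dv Nhat sg M th eta kavg p0) by (eapply uniqueness_limite; [exact Hder| apply RD; lra]).
    assert (Hp0ys : ys < p0 * kavg).
    { destruct (Rtotal_order (p0 * kavg) ys) as [H|[H|H]]; auto.
      - assert (H2 := DL p0 ltac:(lra) H). lra.
      - assert (H2 := DE p0 ltac:(lra) H). lra. }
    assert (Hp0 : ph < p0) by (apply Rmult_lt_reg_r with kavg; lra).
    assert (HA : kpeak * (Nhat * Gf sg M (Qy th (p0 * kavg))) = C).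
    { apply (glb_boundary n w Nhat sg M th eta Hwsum HNhat Hsigma HPhimax Htheta Heta kavg kpeak C p0 Hk Hkp Hglb). lra. }
    assert (HP0 : Pset n w Nhat sg M th kavg kpeak eta C p0) by (apply PI; auto; split; lra).
    assert (HRdec : forall p, p0 < p -> Rev n w Nhat sg M th kavg eta p < Rev n w Nhat sg M th kavg eta p0).
    { intros p Hp. eapply Rev_decr; eauto; lra. }
    split; [|split; [|split]].
    + intros p. split.
      * intros [HPp Hmax]. assert (p0 <= p) by (destruct Hglb as [Hg1 _]; auto).
        destruct (Req_dec p p0); auto. assert (H2 := Hmax p0 HP0). assert (H3 := HRdec p ltac:(lra)). lra.
      * intros E. rewrite E. split; auto. intros p' Hp'. assert (p0 <= p') by (destruct Hglb as [Hg1 _]; auto).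
        destruct (Req_dec p' p0) as [E2|E2]. rewrite E2; lra. left. apply HRdec. lra.
    + unfold Apeak. rewrite (Xtot_eq n w Nhat sg M th Hwsum Hsigma HPhimax). exact HA.
    + exists (fun k => epsilon (inhabits 0) (fun m => 0 < k -> is_glb (Pset n w Nhat sg M th kavg k eta C) m)).
      intros k Hk0. apply (epsilon_spec (inhabits 0) (fun m => 0 < k -> is_glb (Pset n w Nhat sg M th kavg k eta C) m)); auto.
      destruct (glb_exists (Pset n w Nhat sg M th kavg k eta C) eta) as [m Hm].
      * apply (Pset_ne n w Nhat sg M th eta Hwsum HNhat Hsigma HPhimax Htheta Heta); auto.
      * intros x Hx. apply PI in Hx; auto. lra.
      * exists m. auto.
    + intros g Hg.
      assert (Hg0 : g kpeak = p0) by (apply (glb_unique _ _ _ (Hg kpeak Hkp) Hglb)).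
      assert (HDp0 : Dom sg M th (p0 * kavg)) by (eapply Dom_up; eauto).
      set (Q0 := Qy th (p0 * kavg)).
      assert (HQ0 : Q0 < M) by (destruct HDp0 as [_ [H _]]; exact H).
      assert (HQ0p : 0 < Q0) by apply Qy_pos.
      set (Gm := Rmin (Gf sg M (Qy th (eta * kavg))) (Gmax sg M)).
      assert (HGeta : Gf sg M Q0 < Gf sg M (Qy th (eta * kavg))) by (apply Xlt; auto; lra).
      assert (HGmax : Gf sg M Q0 < Gmax sg M) by (apply Gf_max; auto).
      assert (HGm : Gf sg M Q0 < Gm) by (unfold Gm; apply Rmin_glb_lt; auto).
      assert (HGm0 : 0 < Gf sg M Q0) by (apply Gf_pos; auto).
      set (kl := C / (Nhat * Gm)).
      assert (Hkl : 0 < kl /\ kl < kpeak).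
      { unfold kl. split. apply Rdiv_lt_0_compat; nra.
        apply Rmult_lt_reg_r with (Nhat * Gm). nra.
        replace (C / (Nhat * Gm) * (Nhat * Gm)) with C by (field; split; lra).
        rewrite <- HA. fold Q0. apply Rmult_lt_compat_l; [lra|]. apply Rmult_lt_compat_l; lra. }
      assert (Key : forall k, Rabs (k - kpeak) < kpeak - kl ->
        0 < k /\ eta < g k /\ k * (Nhat * Gf sg M (Qy th (g k * kavg))) = C /\ Qy th (g k * kavg) < M).
      { intros k Hkk. apply Rabs_def2 in Hkk.
        assert (Hkpos : 0 < k) by lra.
        assert (HkG : C < k * (Nhat * Gm)).
        { assert (kl < k) by lra. unfold kl in H.
          apply Rmult_lt_reg_r with (/ (Nhat * Gm)). apply Rinv_0_lt_compat; nra.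
          replace (k * (Nhat * Gm) * / (Nhat * Gm)) with k by (field; split; lra). exact H. }
        assert (Hgk := Hg k Hkpos).
        assert (HPk : forall x, Pset n w Nhat sg M th kavg k eta C x -> eta < x).
        { intros x Hx. apply PI in Hx; auto. tauto. }
        assert (Hgk1 : eta <= g k) by (apply (glb_ge _ _ _ Hgk HPk)).
        assert (Hgk2 : eta < g k).
        { destruct (Req_dec (g k) eta) as [E|E]; [|lra]. exfalso.
          assert (HGmin : Gm <= Gf sg M (Qy th (eta * kavg))) by apply Rmin_l.
          assert (Hpos : 0 < k * (Nhat * Gf sg M (Qy th (eta * kavg))) - C).
          { assert (k * (Nhat * Gm) <= k * (Nhat * Gf sg M (Qy th (eta * kavg)))).
            { apply Rmult_le_compat_l. lra. apply Rmult_le_compat_l; lra. }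
            lra. }
          destruct (A_cont Nhat sg M th Hsigma Htheta kavg k eta Hk Heta _ Hpos) as [d [Hd Hd']].
          destruct (glb_approx _ _ Hgk d Hd) as [x [Hx1 Hx2]].
          apply PI in Hx1; auto. destruct Hx1 as [Hx1 Hx3]. rewrite E in Hx2.
          assert (Hd2 := Hd' x ltac:(rewrite Rabs_pos_eq by lra; lra)). apply Rabs_def2 in Hd2. lra. }
        assert (HAk := glb_boundary n w Nhat sg M th eta Hwsum HNhat Hsigma HPhimax Htheta Heta kavg k C (g k) Hk Hkpos Hgk Hgk2).
        split; auto. split; auto. split; auto.
        apply Rnot_le_lt. intro HM'. rewrite (Gf_eqmax sg M) in HAk by auto.
        assert (Gm <= Gmax sg M) by apply Rmin_r.
        assert (k * (Nhat * Gm) <= k * (Nhat * Gmax sg M)).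
        { apply Rmult_le_compat_l. lra. apply Rmult_le_compat_l; lra. }
        lra. }
      assert (HGd : Gd sg M Q0 = 1 - sf sg M Q0) by (unfold P2.Gd; destruct (Rle_dec M Q0); [lra|auto]).
      assert (Hsf : sf sg M Q0 < 1) by (apply sf_lt1; auto).
      set (dd := Gd sg M Q0 * Q0 / ((1 - th) * p0)).
      assert (Hdd : 0 < dd).
      { unfold dd. rewrite HGd. apply Rdiv_lt_0_compat. apply Rmult_lt_0_compat; lra.
        apply Rmult_lt_0_compat; lra. }
      exists (C / (Nhat * kpeak ^ 2) / dd). split.
      2: { apply Rdiv_lt_0_compat; auto. apply Rdiv_lt_0_compat; auto. apply Rmult_lt_0_compat; auto. apply pow_lt; lra. }
      apply (inv_deriv2 (fun p => - Gf sg M (Qy th (p * kavg))) g (fun k => - C / (Nhat * k))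
               (fun p => 0 < p /\ Qy th (p * kavg) < M) p0 kpeak dd (C / (Nhat * kpeak ^ 2)) (p0 - ph) (kpeak - kl)).
      * intros x y [Hx HxQ] [Hy HyQ] Hxy. apply Ropp_lt_contravar. apply Xlt; auto.
      * lra.
      * intros x Hx. apply Rabs_def2 in Hx.
        assert (HD : Dom sg M th (x * kavg)).
        { apply (Dom_up sg M th Hsigma Htheta ys); auto. rewrite <- Hphk. apply Rmult_lt_compat_r; lra. }
        split. lra. destruct HD as [_ [H _]]; exact H.
      * replace dd with (- (Gd sg M (Qy th (p0 * kavg)) * (- Qy th (p0 * kavg) / ((1 - th) * p0))))
          by (unfold dd, Q0; field; lra).
        apply (derivable_pt_lim_opp (fun p => Gf sg M (Qy th (p * kavg)))). apply X_deriv; auto; lra.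
      * exact Hdd.
      * apply is_derive_Reals. auto_derive. apply Rmult_integral_contrapositive; lra. field. lra.
      * exact Hg0.
      * cbv beta. rewrite <- HA. unfold Q0. field. lra.
      * lra.
      * intros k Hkk. destruct (Key k Hkk) as [Hk1 [Hk2 [Hk3 Hk4]]]. split; [split; lra|]. split.
        -- apply Rmult_eq_reg_l with (k * Nhat). 2: (apply Rgt_not_eq; apply Rmult_lt_0_compat; lra).
           replace (k * Nhat * - Gf sg M (Qy th (g k * kavg))) with (- (k * (Nhat * Gf sg M (Qy th (g k * kavg))))) by ring.
           rewrite Hk3. field. lra.
        -- intros Hneq E. apply Hneq.
           assert (C / (Nhat * k) = C / (Nhat * kpeak)) by lra.
           apply Rmult_eq_reg_l with C; [|lra].
           apply Rmult_eq_reg_r with (/ (Nhat * k * kpeak)). 2: (apply Rinv_neq_0_compat; apply Rgt_not_eq; apply Rmult_lt_0_compat; [apply Rmult_lt_0_compat|]; lra).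
           replace (C * k * / (Nhat * k * kpeak)) with (C / (Nhat * kpeak)) by (field; repeat split; lra).
           replace (C * kpeak * / (Nhat * k * kpeak)) with (C / (Nhat * k)) by (field; repeat split; lra). lra.
  - intros p0 l Hglb Hder Hl.
    assert (Hne := Pset_ne n w Nhat sg M th eta Hwsum HNhat Hsigma HPhimax Htheta Heta kavg kpeak C Hk Hkp HC).
    assert (Hp0eta : eta <= p0) by (apply (glb_ge _ _ _ Hglb HPeta)).
    assert (Hl' : l = Dv Nhat sg M th eta kavg p0) by (eapply uniqueness_limite; [exact Hder| apply RD; lra]).
    assert (Hp0ys : p0 * kavg < ys).
    { destruct (Rtotal_order (p0 * kavg) ys) as [H|[H|H]]; auto.
      - assert (H2 := DE p0 ltac:(lra) H). lra.
      - assert (H2 := DG p0 ltac:(lra) H). lra. }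
    assert (Hp0 : p0 < ph) by (apply Rmult_lt_reg_r with kavg; lra).
    destruct (glb_approx _ _ Hglb (ph - p0) ltac:(lra)) as [x [Hx1 Hx2]].
    assert (Hx0 : p0 <= x) by (destruct Hglb as [Hg1 _]; auto).
    apply PI in Hx1; auto. destruct Hx1 as [Hx1 Hx3].
    assert (Hstrict : Gf sg M (Qy th (ph * kavg)) < Gf sg M (Qy th (x * kavg))).
    { apply Xlt; auto. lra. rewrite Hphk; auto. }
    assert (HAph : kpeak * (Nhat * Gf sg M (Qy th (ph * kavg))) < C).
    { assert (kpeak * (Nhat * Gf sg M (Qy th (ph * kavg))) < kpeak * (Nhat * Gf sg M (Qy th (x * kavg)))).
      { apply Rmult_lt_compat_l; [lra|]. apply Rmult_lt_compat_l; lra. }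
      lra. }
    assert (HPph : Pset n w Nhat sg M th kavg kpeak eta C ph) by (apply PI; auto; split; lra).
    assert (Hmax : forall p', Pset n w Nhat sg M th kavg kpeak eta C p' -> p' <> ph ->
       Rev n w Nhat sg M th kavg eta p' < Rev n w Nhat sg M th kavg eta ph).
    { intros p' Hp' Hne'. apply HPeta in Hp'. destruct (Rtotal_order p' ph) as [H|[H|H]].
      - eapply Rev_incr; eauto; lra.
      - contradiction.
      - eapply Rev_decr; eauto; lra. }
    exists ph. split; [|split; [|split; [|split]]].
    + intros p. split.
      * intros [HPp Hm]. destruct (Req_dec p ph) as [E|E]; auto.
        assert (H1 := Hm ph HPph). assert (H2 := Hmax p HPp E). lra.
      * intros E. rewrite E. split; auto. intros p' Hp'. destruct (Req_dec p' ph) as [E2|E2].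
        rewrite E2; lra. left. apply Hmax; auto.
    + unfold Apeak. rewrite (Xtot_eq n w Nhat sg M th Hwsum Hsigma HPhimax). lra.
    + rewrite <- (DE ph) by (lra || auto). apply RD; lra.
    + exists (fun k => epsilon (inhabits 0) (fun p => 0 < k -> eta < p /\ derivable_pt_lim (Rev n w Nhat sg M th k eta) p 0)).
      intros k Hk0. apply (epsilon_spec (inhabits 0) (fun p => 0 < k -> eta < p /\ derivable_pt_lim (Rev n w Nhat sg M th k eta) p 0)); auto.
      destruct (Ky_exists sg M th eta Hsigma HPhimax Htheta Heta k Hk0) as [yk [Hyk HKyk]].
      assert (Hykg := ys_gt sg M th eta Hsigma Htheta k yk Hyk HKyk).
      exists (yk / k). intros _. split.
      * apply Rmult_lt_reg_r with k; auto. replace (yk / k * k) with yk by (field; lra). lra.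
      * assert (Hpos : 0 < yk / k) by (assert (0 < eta * k) by (apply Rmult_lt_0_compat; lra); apply Rdiv_lt_0_compat; lra).
        replace 0 with (Dv Nhat sg M th eta k (yk / k)). apply RD; auto.
        eapply Dv_eq; eauto. field; lra.
    + intros g Hg.
      assert (Hgk : forall k, 0 < k -> Dom sg M th (g k * k) /\ Ky sg M th (g k * k) = eta * k).
      { intros k Hk0. destruct (Hg k Hk0) as [Hg1 Hg2].
        destruct (Ky_exists sg M th eta Hsigma HPhimax Htheta Heta k Hk0) as [yk [Hyk HKyk]].
        assert (Hd0 : Dv Nhat sg M th eta k (g k) = 0) by (eapply uniqueness_limite; [apply RD; lra|exact Hg2]).
        assert (E : g k * k = yk) by (apply (crit_unique Nhat sg M th eta HNhat Hsigma HPhimax Htheta Heta k yk Hk0 Hyk HKyk (g k)); [lra|exact Hd0]).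
        rewrite E; auto. }
      assert (Hgkavg : g kavg * kavg = ys).
      { destruct (Hg kavg Hk) as [Hg1 Hg2].
        assert (Hd0 : Dv Nhat sg M th eta kavg (g kavg) = 0) by (eapply uniqueness_limite; [apply RD; lra|exact Hg2]).
        apply (crit_unique Nhat sg M th eta HNhat Hsigma HPhimax Htheta Heta kavg ys Hk Hys HKy (g kavg)); [lra|exact Hd0]. }
      split.
      { unfold ph. rewrite <- Hgkavg. field. lra. }
      destruct (Dom_iff sg M th Hsigma HPhimax Htheta) as [a [Ha Hiff]].
      assert (Hays : a < ys) by (apply Hiff; auto).
      assert (HKd : 0 < Kd sg M th ys) by (apply Kd_pos; auto).
      exists (eta / Kd sg M th ys). split.
      2: { apply Rdiv_lt_0_compat; auto. }
      apply (inv_deriv2 (Ky sg M th) (fun k => g k * k) (fun k => eta * k) (Dom sg M th) ys kavg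
               (Kd sg M th ys) eta (ys - a) kavg).
      * intros y1 y2 H1 H2 H3. apply Ky_lt; auto.
      * lra.
      * intros y Hy. apply Rabs_def2 in Hy. apply Hiff. lra.
      * apply Ky_deriv; auto. destruct Hys as [H1 _]; auto.
        apply sf_lt1; auto. split; auto. apply Qy_pos.
      * exact HKd.
      * apply is_derive_Reals. auto_derive; auto. ring.
      * exact Hgkavg.
      * exact HKy.
      * lra.
      * intros k Hkk. apply Rabs_def2 in Hkk. destruct (Hgk k ltac:(lra)) as [Hk1 Hk2].
        split; auto. split; auto. intros Hneq E. apply Hneq. apply Rmult_eq_reg_l with eta; lra.
Qed.
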